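(* Let $q$ be an odd prime power, $c\in\mathbb{F}_q^*$, and $f(X)=X(X^{q-1}-c)^{q+1}$ viewed as a map $\mathbb{F}_{q^2}\to\mathbb{F}_{q^2}$. Let $\mathrm{Fix}(f)=\{\alpha\in\mathbb{F}_{q^2}: f(\alpha)=\alpha\}$. Then \[ |\mathrm{Fix}(f)|=\begin{cases} q & \text{if } c^2=4,\\ 2q-1 & \text{if } c^2\neq 4 \text{ and } \chi_2\!\left(\frac{c+2}{c-2}\right)=-1,\\ 1 & \text{if } c^2\neq 4 \text{ and } \chi_2\!\left(\frac{c+2}{c-2}\right)=1.\end{cases} \]
   Context: $\chi_2$ is the quadratic character of $\mathbb{F}_q$: $\chi_2(\alpha)=1$ if $\alpha$ is a nonzero square in $\mathbb{F}_q$, $-1$ if $\alpha$ is a non-square, and $0$ if $\alpha=0$. *)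

(* Defs.v *)
From HB Require Import structures.
From mathcomp Require Import all_boot all_order all_algebra all_field.
Set Implicit Arguments. Unset Strict Implicit. Unset Printing Implicit Defensive.
Import GRing.Theory.
Local Open Scope ring_scope.

(* L plays the role of F_{q^2} (hypothesis #|L| = q^2 in the theorem);
   F_q is the subfield {x : L | x^q = x}. *)
Definition inFq (L : finFieldType) (q : nat) (x : L) : bool := x ^+ q == x.

Definition chi2 (L : finFieldType) (q : nat) (a : L) : int :=
  if a == 0 then 0
  else if [exists y : L, inFq q y && (y ^+ 2 == a)] then 1 else -1.

Definition fmap (L : finFieldType) (q : nat) (c : L) (x : L) : L :=
  x * (x ^+ (q.-1) - c) ^+ q.+1.

Definition Fix (L : finFieldType) (q : nat) (c : L) : {set L} :=
  [set x : L | fmap q c x == x].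

(* Main.v *)
Require Import Defs.
From HB Require Import structures.
From mathcomp Require Import all_boot all_order all_algebra all_field.
From mathcomp Require Import ring zify.
Import GRing.Theory.
Local Open Scope ring_scope.

Lemma card_roots (F : fieldType) (T : finType) (g : T -> F) (A : {set T}) (P : {poly F}) :
  P != 0 -> {in A &, injective g} -> (forall x, x \in A -> root P (g x)) ->
  (#|A| <= (size P).-1)%N.
Proof.
move=> P0 inj hr.
have := max_poly_roots P0 (rs := [seq g x | x <- enum A]).
rewrite size_map -cardE.
have -> : all (root P) [seq g x | x <- enum A].
  by apply/allP => y /mapP [x]; rewrite mem_enum => xA ->; apply: hr.
rewrite map_inj_in_uniq ?enum_uniq; last by move=> x y; rewrite !mem_enum; apply: inj.
by move=> /(_ isT isT); case: (size P).
Qed.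

Lemma card_roots_set (F : finFieldType) (A : {set F}) (P : {poly F}) :
  P != 0 -> (forall x, x \in A -> root P x) -> (#|A| <= (size P).-1)%N.
Proof. by move=> P0 hr; apply: (@card_roots F F id) => // x y _ _. Qed.

Lemma card_fib_le (T T' : finType) (f : T -> T') (A : {set T}) k :
  (forall z, #|[set x in A | f x == z]| <= k)%N -> (#|A| <= #|f @: A| * k)%N.
Proof.
move=> hk; rewrite -sum1_card (partition_big f (mem (f @: A))) /=; last first.
  by move=> x xA; apply: imset_f.
rewrite -sum_nat_const leq_sum // => z _.
by rewrite sum1dep_card (leq_trans _ (hk z)) // subset_leq_card //; apply/subsetP=> x; rewrite !inE.
Qed.

Section S.
Variables (L : finFieldType) (p k h q : nat).
Hypotheses (pp : prime p) (k0 : (0 < k)%N) (Hqp : q = (p ^ k)%N) (Hqh : q = h.*2.+1)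
  (HL : #|L| = (q ^ 2)%N).

Lemma charp : p \in [pchar L].
Proof. by apply: (card_finPcharP (n := (k * 2)%N)) => //; rewrite HL Hqp expnM. Qed.

Lemma qnat : [pchar L].-nat q.
Proof. by rewrite Hqp (eq_pnat _ (pcharf_eq charp)) pnatX pnat_id. Qed.

Lemma frobD (a b : L) : (a + b) ^+ q = a ^+ q + b ^+ q.
Proof. exact: exprDn_pchar qnat. Qed.
Lemma frobN (a : L) : (- a) ^+ q = - a ^+ q.
Proof. exact: exprNn_pchar qnat. Qed.
Lemma frobB (a b : L) : (a - b) ^+ q = a ^+ q - b ^+ q.
Proof. by rewrite frobD frobN. Qed.

Lemma two0 : (2 : L) != 0.
Proof.
apply/negP => /eqP h2.
have : (2 \in [pchar L])%N by rewrite inE /= h2 eqxx.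
rewrite (pcharf_eq charp) inE /= => /eqP p2.
move: Hqh; rewrite Hqp -p2 => e.
have : odd (2 ^ k) by rewrite e /= odd_double.
by rewrite oddX /= orbF; case: k k0.
Qed.

Lemma h0 : (0 < h)%N.
Proof.
have p2 : (2 <= p)%N by apply: prime_gt1.
have : (2 <= q)%N by rewrite Hqp; apply: (leq_trans p2); rewrite -{1}(expn1 p); apply: leq_pexp2l => //; exact: prime_gt0.
rewrite Hqh; lia.
Qed.

Lemma unit_pow (x : L) : x != 0 -> x ^+ (q.-1 * q.+1) = 1.
Proof.
move=> x0; have := expf_card x; rewrite HL.
have -> : (q ^ 2 = (q.-1 * q.+1).+1)%N by rewrite Hqh; lia.
rewrite exprS => e; apply: (mulfI x0); by rewrite mulr1.
Qed.

Lemma mu_pow (x : L) : x != 0 -> (x ^+ q.-1) ^+ q.+1 = 1.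
Proof. by move=> x0; rewrite -exprM unit_pow. Qed.

Definition fib (u : L) := [set x : L | x ^+ q.-1 == u].
Definition mu := [set u : L | u ^+ q.+1 == 1].

Lemma fib_le u : (#|fib u| <= q.-1)%N.
Proof.
have qq : (0 < q.-1)%N by rewrite Hqh /=; have := h0; lia.
have := @card_roots_set L (fib u) ('X^(q.-1) - u%:P).
rewrite size_XnsubC //= => -> //.
  by rewrite -size_poly_gt0 size_XnsubC.
by move=> x; rewrite inE rootE !hornerE => /eqP ->; rewrite subrr.
Qed.

Lemma mu_le : (#|mu| <= q.+1)%N.
Proof.
have := @card_roots_set L mu ('X^(q.+1) - 1%:P).
rewrite size_XnsubC //= => -> //.
  by rewrite -size_poly_gt0 size_XnsubC.
by move=> x; rewrite inE rootE !hornerE => /eqP ->; rewrite subrr.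
Qed.

Lemma fib_card u : u \in mu -> #|fib u| = q.-1.
Proof.
have hsum : (\sum_(v in mu) #|fib v| = q.-1 * q.+1)%N.
  have : (\sum_(x : L | x != 0%R) 1%N = q.-1 * q.+1)%N.
    rewrite sum1dep_card.
    have -> : [set x : L | x != 0] = [set~ 0] by apply/setP => x; rewrite !inE.
    by rewrite cardsC1 HL Hqh; lia.
  rewrite (partition_big (fun x : L => x ^+ q.-1) (mem mu)) /=; last first.
    by move=> x x0; rewrite inE mu_pow.
  move=> <-; apply: eq_bigr => v vmu; rewrite sum1dep_card; apply: eq_card => x.
  rewrite !inE; case: (eqVneq x 0) => [->|] //=.
  rewrite expr0n /= (_ : q.-1 == 0 = false) /=; last by rewrite Hqh /=; have := h0; lia.
  by apply/eqP=> v0; move: vmu; rewrite -v0 inE expr0n /= eq_sym oner_eq0.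

have H := @leqif_sum _ (mem mu) (fun v => #|fib v| == q.-1) (fun v => #|fib v|) (fun _ => q.-1)
   (fun v _ => leqif_eq (fib_le v)).
have E : (\sum_(v in mu) #|fib v| == \sum_(v in mu) q.-1)%N.
  rewrite eqn_leq leq_sum /=; last by move=> v _; exact: fib_le.
  rewrite hsum sum_nat_const.
  by rewrite mulnC leq_mul2l mu_le orbT.
move: (eq_leqif H); rewrite E => /esym /forall_inP hh /hh /eqP //.
Qed.


Variable c : L.
Hypotheses (Hc : c ^+ q = c) (Hc0 : c != 0).

Definition U := [set u : L | (u ^+ q.+1 == 1) && (u ^+ 2 - c * u + 1 == 0)].

Lemma qm1 : (q.-1 == 0)%N = false.
Proof. by rewrite Hqh /=; have := h0; lia. Qed.

Lemma fix_char x : (x * (x ^+ q.-1 - c) ^+ q.+1 == x) = (x == 0) || (x ^+ q.-1 \in U).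
Proof.
case: (eqVneq x 0) => [->|x0]; first by rewrite mul0r eqxx.
set u := x ^+ q.-1.
have mu1 : u ^+ q.+1 = 1 by rewrite /u mu_pow.
have u0 : u != 0 by rewrite expf_neq0.
have uq : u ^+ q = u^-1 by apply: (mulfI u0); rewrite mulfV // -exprS.
rewrite inE /= mu1 eqxx /=.
rewrite -{2}(mulr1 x) (inj_eq (mulfI x0)).
rewrite exprS frobB uq Hc.
have e : (u - c) * (u^-1 - c) - 1 = - (c / u) * (u ^+ 2 - c * u + 1) by field.
by rewrite -subr_eq0 e mulf_eq0 oppr_eq0 mulf_eq0 invr_eq0 (negPf Hc0) (negPf u0).
Qed.

Lemma fix_card : #|Fix q c| = (#|U| * q.-1).+1.
Proof.
have -> : Fix q c = 0 |: [set x : L | x ^+ q.-1 \in U].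
  by apply/setP => x; rewrite /Fix /fmap in_set fix_char in_setU1 in_set.
rewrite cardsU1 inE expr0n qm1 inE /= expr0n /= eq_sym oner_eq0 /= add1n.
congr S.
rewrite -sum1dep_card (partition_big (fun x : L => x ^+ q.-1) (mem U)) //=.
rewrite -sum_nat_const; apply: eq_bigr => v vU.
rewrite sum1dep_card -[RHS](@fib_card v); last first.
  by move: vU; rewrite !inE => /andP [].
apply: eq_card => x; rewrite [in RHS]inE [in LHS]in_set.
by case: (eqVneq (x ^+ q.-1) v) => [->|]; rewrite ?vU ?andbF.
Qed.


Lemma four0 : (4 : L) != 0.
Proof. by rewrite (_ : 4 = 2 * 2); [rewrite mulf_neq0 ?two0 | ring]. Qed.

Lemma c24 : c ^+ 2 != 4 -> (c - 2 != 0) /\ (c + 2 != 0).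
Proof.
move=> h4; have e : c ^+ 2 - 4 = (c - 2) * (c + 2) by ring.
have : (c - 2) * (c + 2) != 0 by rewrite -e subr_eq0.
by rewrite mulf_eq0 negb_or => /andP.
Qed.

Lemma caseA : c ^+ 2 = 4 -> U = [set c / 2].
Proof.
move=> h4; have t0 := two0.
apply/setP => w; rewrite !inE.
have e : w ^+ 2 - c * w + 1 = (w - c / 2) ^+ 2.
  rewrite (_ : w ^+ 2 - c * w + 1 = w ^+ 2 - c * w + c ^+ 2 / 4); last by rewrite h4 divff ?four0.
  by field; rewrite t0 four0.
rewrite e sqrf_eq0 subr_eq0.
case: (eqVneq w (c / 2)) => [->|]; rewrite ?andbF // andbT.
have s1 : (c / 2) ^+ 2 = 1.
  by rewrite expr_div_n h4 (_ : (2 : L) ^+ 2 = 4) ?divff ?four0 //; ring.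
rewrite Hqh -mul2n (_ : ((2 * h).+2 = 2 * h.+1)%N); last lia.
by rewrite exprM s1 expr1n eqxx.
Qed.

Lemma inU_inv w : w \in U -> w ^+ q = w^-1 /\ w != 0.
Proof.
rewrite inE => /andP [/eqP mu1 _].
have w0 : w != 0 by apply/eqP => w0; move: mu1; rewrite w0 expr0n /= => /eqP; rewrite eq_sym oner_eq0.
by split => //; apply: (mulfI w0); rewrite mulfV // -exprS.
Qed.

Lemma keyB w : w \in U -> c ^+ 2 != 4 ->
  exists y0, [/\ y0 ^+ 2 = (c + 2) / (c - 2), y0 ^+ q = - y0 & y0 != 0].
Proof.
move=> wU h4; have [wq w0] := inU_inv w wU.
have [cm2 cp2] := c24 h4.
move: wU; rewrite inE => /andP [_ /eqP E].
have hcw : c * w = w ^+ 2 + 1 by have := congr1 (fun t => c * w + t) E; rewrite addr0 => <-; ring.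
have hc : c = (w ^+ 2 + 1) / w by rewrite -hcw mulfK.
have w1 : w - 1 != 0.
  apply/negP; rewrite subr_eq0 => /eqP w1e.
  have c2 : c = 2 by rewrite hc w1e expr1n divr1.
  by move: h4; rewrite c2 (_ : (2:L)^+2 = 4) ?eqxx //; ring.
have w1' : w + 1 != 0.
  apply/negP; rewrite addr_eq0 => /eqP w1e.
  have c2 : c = -2 by rewrite hc w1e sqrrN expr1n invrN1 mulrN1 opprD.
  by move: h4; rewrite c2 (_ : (-2:L)^+2 = 4) ?eqxx //; ring.
exists ((w + 1) / (w - 1)); split.
- rewrite hc; field.
  rewrite (_ : w ^+ 2 + 1 + -2 * w = (w - 1) ^+ 2); last by ring.
  by rewrite w0 sqrf_eq0 w1.
- rewrite expr_div_n frobD frobB wq expr1n; field.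
  rewrite (_ : 1 + -1 * w = - (w - 1)); last by ring.
  by rewrite w0 oppr_eq0 w1.
- by rewrite mulf_neq0 ?invr_eq0.
Qed.


Lemma caseB : c ^+ 2 != 4 -> (exists y, (y ^+ q == y) && (y ^+ 2 == (c + 2) / (c - 2))) ->
  (c + 2) / (c - 2) != 0 -> U = set0.
Proof.
move=> h4 [y /andP [/eqP yq /eqP y2]] r0.
apply/setP => w; rewrite in_set0; apply/negP => wU.
have [y0 [e1 e2 e3]] := keyB w wU h4.
have : (y - y0) * (y + y0) = 0.
  have e : (y - y0) * (y + y0) = y ^+ 2 - y0 ^+ 2 by ring.
  by rewrite e y2 e1 subrr.
have yq' : (y - y0) * (y + y0) = 0 -> y ^+ q = - y.
  move/eqP; rewrite mulf_eq0 => /orP [] /eqP.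
    by move/eqP; rewrite subr_eq0 => /eqP ->.
  by move/eqP; rewrite addr_eq0 => /eqP ->; rewrite frobN e2 opprK.
move/yq'; rewrite yq => /eqP; rewrite -subr_eq0 opprK => /eqP yy.
have y00 : y = 0.
  have e2y : 2 * y = 0 by rewrite -yy; ring.
  by move/eqP: e2y; rewrite mulf_eq0 (negPf two0) /= => /eqP.
by move: r0; rewrite -y2 y00 expr0n eqxx.
Qed.

Lemma sqrt_ex (r : L) : r != 0 -> r ^+ q = r -> exists y, y ^+ 2 = r.
Proof.
move=> r0 rq.
pose n := (q.-1 * h.+1)%N.
have n0 : (0 < n)%N by rewrite /n Hqh /=; have := h0; lia.
pose Q := [set z : L | z ^+ n == 1].
pose im := [set x ^+ 2 | x in [set~ (0 : L)]].
have imQ : im \subset Q.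
  apply/subsetP => z /imsetP [x]; rewrite !inE => x0 ->.
  by rewrite -exprM (_ : (2 * n = q.-1 * q.+1)%N) ?unit_pow // /n Hqh; lia.
have cQ : (#|Q| <= n)%N.
  have := @card_roots_set L Q ('X^n - 1%:P).
  rewrite size_XnsubC //= => -> //.
    by rewrite -size_poly_gt0 size_XnsubC.
  by move=> x; rewrite inE rootE !hornerE => /eqP ->; rewrite subrr.
have cim : (2 * n <= 2 * #|im|)%N.
  have H := @card_fib_le L L (fun x => x ^+ 2) [set~ (0 : L)] 2.
  rewrite cardsC1 HL mulnC in H.
  have Hf : forall z, (#|[set x in [set~ (0%R:L)] | x ^+ 2 == z]| <= 2)%N.
    move=> z; have := @card_roots_set L [set x in [set~ (0:L)] | x ^+ 2 == z] ('X^2 - z%:P).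
    rewrite size_XnsubC //= => -> //.
      by rewrite -size_poly_gt0 size_XnsubC.
    by move=> x; rewrite !inE rootE !hornerE => /andP [_ /eqP ->]; rewrite subrr.
  apply: leq_trans (H Hf); rewrite /n Hqh; lia.
have eqQ : im = Q.
  apply/eqP; rewrite eqEcard imQ /=; apply: (leq_trans cQ); rewrite leq_mul2l in cim; exact: cim.
have : r \in im.
  rewrite eqQ inE /n exprM.
  have -> : r ^+ q.-1 = 1.
    apply: (mulfI r0); rewrite mulr1 -exprS.
    by rewrite (_ : (q.-1).+1 = q) // Hqh.
  by rewrite expr1n.
by case/imsetP => x _ ->; exists x.
Qed.


Lemma caseC : c ^+ 2 != 4 -> ~ (exists y, (y ^+ q == y) && (y ^+ 2 == (c + 2) / (c - 2))) ->
  (c + 2) / (c - 2) != 0 -> #|U| = 2%N.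
Proof.
move=> h4 nex r0.
have [cm2 cp2] := c24 h4.
have t0 := two0.
have t2 : (2:L) ^+ q = 2 by rewrite (_ : (2:L) = 1 + 1) ?frobD ?expr1n //; ring.
have rq : ((c + 2) / (c - 2)) ^+ q = (c + 2) / (c - 2) by rewrite expr_div_n frobD frobB Hc t2.
set r := (c + 2) / (c - 2) in nex r0 rq *.
have [y y2] := sqrt_ex r r0 rq.
have yq : y ^+ q != y by apply/eqP => yq; apply: nex; exists y; rewrite yq y2 !eqxx.
have yq2 : y ^+ q = - y.
  have e : (y ^+ q - y) * (y ^+ q + y) = 0.
    rewrite (_ : (y ^+ q - y) * (y ^+ q + y) = (y ^+ 2) ^+ q - y ^+ 2); last by rewrite -exprM mulnC exprM; ring.
    by rewrite y2 rq subrr.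
  move/eqP: e; rewrite mulf_eq0 subr_eq0 (negPf yq) /= addr_eq0 => /eqP //.
have y0 : y != 0 by apply: contra r0 => /eqP y0; rewrite -y2 y0 expr0n.
have ym1 : y - 1 != 0.
  by apply: contra yq; rewrite subr_eq0 => /eqP ->; rewrite expr1n.
have yp1 : y + 1 != 0.
  by apply: contra yq; rewrite addr_eq0 => /eqP ->; rewrite frobN expr1n.
have ym1' : - y - 1 != 0 by rewrite -opprD oppr_eq0.
set u := (y + 1) / (y - 1).
have u0 : u != 0 by rewrite mulf_neq0 ?invr_eq0.
have uq : u ^+ q = (- y + 1) / (- y - 1) by rewrite expr_div_n frobD frobB yq2 expr1n.
have uu : u * u ^+ q = 1 by rewrite uq /u; field; rewrite ym1 ym1'.
have umu : u ^+ q.+1 = 1 by rewrite exprS.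
have r1 : r - 1 != 0.
  rewrite (_ : r - 1 = 4 / (c - 2)); first by rewrite mulf_neq0 ?invr_eq0 ?four0.
  by rewrite /r; field.
have hr : r * (c - 2) = c + 2 by rewrite /r divfK.
have hcr : c * (r - 1) = 2 * (r + 1).
  apply/eqP; rewrite -subr_eq0; apply/eqP.
  rewrite (_ : c * (r - 1) - 2 * (r + 1) = r * (c - 2) - (c + 2)); first by rewrite hr subrr.
  ring.
have hc : c = 2 * (r + 1) / (r - 1) by rewrite -hcr mulfK.
have uroot : u ^+ 2 - c * u + 1 = 0.
  rewrite hc -y2 /u; field.
  rewrite ym1 /= (_ : y ^+ 2 - 1 = (y - 1) * (y + 1)) ?mulf_neq0 //; ring.
have uinv : u != u^-1.
  apply/negP => /eqP uE.
  have e : (u - 1) * (u + 1) = 0.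
    rewrite (_ : (u - 1) * (u + 1) = u * u - 1); last by ring.
    by rewrite {2}uE mulfV // subrr.
  move/eqP: e; rewrite mulf_eq0 => /orP [] /eqP.
    rewrite (_ : u - 1 = 2 / (y - 1)); last by rewrite /u; field.
    by move/eqP; rewrite mulf_eq0 invr_eq0 (negPf t0) (negPf ym1).
  rewrite (_ : u + 1 = 2 * y / (y - 1)); last by rewrite /u; field.
  by move/eqP; rewrite !mulf_eq0 invr_eq0 (negPf t0) (negPf ym1) (negPf y0).
have hcu : c = u + u^-1.
  have : c * u = u ^+ 2 + 1.
    by have := congr1 (fun t => c * u + t) uroot; rewrite addr0 => <-; ring.
  by move=> e; rewrite -[c](mulfK u0) e; field.
have -> : U = [set u; u^-1].
  apply/setP => w; rewrite !inE; apply/idP/idP.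
    case/andP => _ /eqP ew.
    have e : (w - u) * (w - u^-1) = 0.
      by rewrite -ew hcu; field.
    by move/eqP: e; rewrite mulf_eq0 !subr_eq0.
  case/orP => /eqP ->.
    by rewrite umu uroot !eqxx.
  rewrite exprVn umu invr1 eqxx /=.
  by rewrite hcu; apply/eqP; field.
by rewrite cards2 uinv.
Qed.


Lemma main_sec :
  (c ^+ 2 = 4 -> #|Fix q c| = q) /\
  (c ^+ 2 != 4 -> chi2 q ((c + 2) / (c - 2)) = -1 -> #|Fix q c| = (2 * q - 1)%N) /\
  (c ^+ 2 != 4 -> chi2 q ((c + 2) / (c - 2)) = 1 -> #|Fix q c| = 1%N).
Proof.
split; [move=> h4 | split => h4; rewrite /chi2; (case: eqP => [_|/eqP r0]; first by []);
  case: existsP => [ex|nex] hchi //].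
- by rewrite fix_card caseA // cards1 mul1n Hqh.
- by rewrite fix_card caseC // Hqh; lia.
- rewrite fix_card caseB ?cards0 //.
Qed.
End S.

Theorem mainTheorem2 (L : finFieldType) (q : nat)
  (Hq : exists p k : nat, [/\ prime p, (0 < k)%N & q = (p ^ k)%N])
  (Hodd : odd q) (HL : #|L| = (q ^ 2)%N)
  (c : L) (Hc : inFq q c) (Hc0 : c != 0) :
  (c ^+ 2 = 4 -> #|Fix q c| = q) /\
  (c ^+ 2 != 4 -> chi2 q ((c + 2) / (c - 2)) = -1 -> #|Fix q c| = (2 * q - 1)%N) /\
  (c ^+ 2 != 4 -> chi2 q ((c + 2) / (c - 2)) = 1 -> #|Fix q c| = 1%N).
Proof.
case: Hq => p [k [pp k0 Hqp]].
have Hqh : q = (q./2).*2.+1 by rewrite -[LHS]odd_double_half Hodd.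
exact: (@main_sec L p k q./2 q pp k0 Hqp Hqh HL c (eqP Hc) Hc0).
Qed.
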